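(* There is no pure state $|\Phi\rangle\in\mathcal H_1\otimes\mathcal H_2\otimes\mathcal H_3\otimes\mathcal H_4$, $\mathcal H_i=\mathbb C^2$, whose Schmidt ranks satisfy simultaneously $\mathrm{Sch}\#^{3,4}_{1,2}(|\Phi\rangle)=4$, $\mathrm{Sch}\#^{1,3}_{2,4}(|\Phi\rangle)=2$ and $\mathrm{Sch}\#^{1,4}_{2,3}(|\Phi\rangle)=2$.
   Context: $\mathrm{Sch}\#^{S}_{T}(|\Phi\rangle)$ denotes the Schmidt rank of $|\Phi\rangle$ with respect to the bipartition of the four qubits into the set $S$ and its complement $T$ (number of nonzero Schmidt coefficients). *)

(* Defs.v *)
From HB Require Import structures.
From mathcomp Require Import all_boot all_order all_algebra.
Set Implicit Arguments. Unset Strict Implicit. Unset Printing Implicit Defensive.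
Import Order.TTheory GRing.Theory Num.Theory.
Local Open Scope ring_scope.

(* Four qubits, indexed 0..3 (paper's 1..4).  A computational basis state is
   x : {ffun 'I_4 -> 'I_2}; a vector of H1⊗H2⊗H3⊗H4 = (C^2)^{⊗4} is given by
   its coefficient function in that basis. *)
Definition basis4 := {ffun 'I_4 -> 'I_2}.
Definition state4 (C : numClosedFieldType) := {ffun basis4 -> C}.

Definition is_pure_state (C : numClosedFieldType) (phi : state4 C) : Prop :=
  \sum_(x : basis4) `|phi x| ^+ 2 = 1.

(* Coefficient matrix of phi w.r.t. the bipartition S | ~S: rows indexed by
   basis states supported on S (zero outside S), columns by basis states
   supported on ~S; entry = coefficient of the joined basis state.  All other
   rows/columns are zero (padding, which does not affect the rank). *)
Definition coef_mx (C : numClosedFieldType) (S : {set 'I_4}) (phi : state4 C)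
  : 'M[C]_(#|{: basis4}|, #|{: basis4}|) :=
  \matrix_(r, c)
    let x : basis4 := enum_val r in let y : basis4 := enum_val c in
    if [forall i, (i \notin S) ==> (x i == ord0)] &&
       [forall i, (i \in S) ==> (y i == ord0)]
    then phi [ffun i => if i \in S then x i else y i]
    else 0.

(* Schmidt rank w.r.t. S | complement(S) = number of nonzero Schmidt
   coefficients = rank of the coefficient matrix. *)
Definition schmidt_rank (C : numClosedFieldType) (S : {set 'I_4}) (phi : state4 C)
  : nat := \rank (coef_mx S phi).

(* Main.v *)
Require Import Defs.
From HB Require Import structures.
From mathcomp Require Import all_boot all_order all_algebra.
From mathcomp Require Import ring.
Set Implicit Arguments. Unset Strict Implicit. Unset Printing Implicit Defensive.
Import Order.TTheory GRing.Theory Num.Theory.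
Local Open Scope ring_scope.

Definition hi (k : nat) : nat := nth 0%N [:: 0; 0; 1; 1]%N k.
Definition lo (k : nat) : nat := nth 0%N [:: 0; 1; 0; 1]%N k.
Definition code (a c : nat) : nat := nth 0%N (nth [::] [:: [:: 0; 1]; [:: 2; 3]]%N a) c.

Lemma hi_code a c : (a < 2)%N -> (c < 2)%N -> hi (code a c) = a.
Proof. by case: a => [|[|a]] //; case: c => [|[|c]]. Qed.
Lemma lo_code a c : (a < 2)%N -> (c < 2)%N -> lo (code a c) = c.
Proof. by case: a => [|[|a]] //; case: c => [|[|c]]. Qed.
Lemma code_lt a c : (a < 2)%N -> (c < 2)%N -> (code a c < 4)%N.
Proof. by case: a => [|[|a]] //; case: c => [|[|c]]. Qed.

Definition det4f (R : comRingType) (m : nat -> nat -> R) : R := 0 + m 0 0 * m 1 1 * m 2 2 * m 3 3 - m 0 0 * m 1 1 * m 2 3 * m 3 2 - m 0 0 * m 1 2 * m 2 1 * m 3 3 + m 0 0 * m 1 2 * m 2 3 * m 3 1 + m 0 0 * m 1 3 * m 2 1 * m 3 2 - m 0 0 * m 1 3 * m 2 2 * m 3 1 - m 0 1 * m 1 0 * m 2 2 * m 3 3 + m 0 1 * m 1 0 * m 2 3 * m 3 2 + m 0 1 * m 1 2 * m 2 0 * m 3 3 - m 0 1 * m 1 2 * m 2 3 * m 3 0 - m 0 1 * m 1 3 * m 2 0 * m 3 2 + m 0 1 * m 1 3 * m 2 2 * m 3 0 + m 0 2 * m 1 0 * m 2 1 * m 3 3 - m 0 2 * m 1 0 * m 2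 3 * m 3 1 - m 0 2 * m 1 1 * m 2 0 * m 3 3 + m 0 2 * m 1 1 * m 2 3 * m 3 0 + m 0 2 * m 1 3 * m 2 0 * m 3 1 - m 0 2 * m 1 3 * m 2 1 * m 3 0 - m 0 3 * m 1 0 * m 2 1 * m 3 2 + m 0 3 * m 1 0 * m 2 2 * m 3 1 + m 0 3 * m 1 1 * m 2 0 * m 3 2 - m 0 3 * m 1 1 * m 2 2 * m 3 0 - m 0 3 * m 1 2 * m 2 0 * m 3 1 + m 0 3 * m 1 2 * m 2 1 * m 3 0.

Lemma det4 (R : comRingType) (A : 'M[R]_4) :
  \det A = det4f (fun i j => A (inord i) (inord j)).
Proof.
pose B := fun i j => A (inord i) (inord j).
have HA : forall i j : 'I_4, A i j = B i j.
  by move=> i j; rewrite /B !inord_val.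
rewrite -/B; clearbody B.
rewrite (expand_det_row _ ord0) !big_ord_recl big_ord0 /cofactor.
rewrite !(expand_det_row _ ord0) !big_ord_recl !big_ord0 /cofactor.
rewrite !(expand_det_row _ ord0) !big_ord_recl !big_ord0 /cofactor.
rewrite !det_mx11 !mxE !HA /=.
rewrite /det4f /bump /= !addn0 !add0n !add1n.
ring.
Qed.

Lemma core (R : comRingType) (M12 M14 : 'M[R]_4) (P : nat -> nat -> nat -> nat -> R)
  (x y : nat -> nat -> R) :
  (forall n m, (n < 4)%N -> (m < 4)%N -> M12 (inord n) (inord m) = P (hi n) (lo n) (hi m) (lo m)) ->
  (forall n m, (n < 4)%N -> (m < 4)%N -> M14 (inord n) (inord m) = P (hi n) (hi m) (lo m) (lo n)) ->
  (forall a b c d, (a < 2)%N -> (b < 2)%N -> (c < 2)%N -> (d < 2)%N ->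
     P a b c d = x (code a c) 0%N * y 0%N (code b d) + x (code a c) 1%N * y 1%N (code b d)) ->
  \det M12 = - \det M14.
Proof.
move=> H12 H14 HP.
have D := @det4 R.
rewrite !D /det4f !H12 // !H14 // /= !HP //= .
ring.
Qed.

Section Rk.
Variable F : fieldType.

Lemma rank_mxsub_le m n p q (f : 'I_p -> 'I_m) (g : 'I_q -> 'I_n) (A : 'M[F]_(m, n)) :
  (\rank (mxsub f g A) <= \rank A)%N.
Proof.
rewrite mxsubrc; apply: (leq_trans (mxrankS (rowsub_sub f _))).
have -> : colsub g A = (rowsub g A^T)^T by apply/matrixP => i j; rewrite !mxE.
by rewrite mxrank_tr; apply: (leq_trans (mxrankS (rowsub_sub g _))); rewrite mxrank_tr.
Qed.

Lemma rank_le_mxsub m n p q (f : 'I_p -> 'I_m) (g : 'I_q -> 'I_n) (A : 'M[F]_(m, n)) :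
  injective f -> injective g ->
  (forall r c, A r c != 0 -> (exists k, r = f k) /\ (exists l, c = g l)) ->
  (\rank A <= \rank (mxsub f g A))%N.
Proof.
move=> injf injg sup.
have E : A = colsub f 1%:M *m mxsub f g A *m rowsub g 1%:M.
  apply/matrixP => r c; rewrite !mxE.
  have inner : forall l, \sum_k (colsub f 1%:M r k * mxsub f g A k l) =
      if [pick k | r == f k] is Some k0 then A (f k0) (g l) else 0.
    move=> l; case: pickP => [k0 /eqP -> | nk].
      rewrite (bigD1 k0) //= !mxE eqxx mulr1n mul1r big1 ?addr0 // => k nk0.
      by rewrite !mxE (inj_eq injf) eq_sym (negbTE nk0) mulr0n mul0r.
    by rewrite big1 // => k _; rewrite !mxE nk mulr0n mul0r.
  under eq_bigr => l _ do rewrite mxE inner.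
  case: pickP => [k0 /eqP -> | nk]; last first.
    rewrite big1 => [|l _]; last by rewrite mul0r.
    apply/eqP; apply: contraT => /sup [[k Ek] _].
    by move: (nk k); rewrite Ek eqxx.
  case: (pickP (fun l => c == g l)) => [l0 /eqP -> | nl].
    rewrite (bigD1 l0) //= !mxE eqxx mulr1n mulr1 big1 ?addr0 // => l nl0.
    by rewrite !mxE (inj_eq injg) (negbTE nl0) mulr0n mulr0.
  rewrite big1 => [|l _]; last by rewrite !mxE eq_sym nl mulr0n mulr0.
  apply/eqP; apply: contraT => /sup [_ [l El]].
  by move: (nl l); rewrite El eqxx.
rewrite {1}E.
by apply: (leq_trans (mxrankM_maxl _ _)); apply: mxrankM_maxr.
Qed.
End Rk.

Definition mkn (a b c d : nat) : basis4 :=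
  [ffun i : 'I_4 => inord (nth 0%N [:: a; b; c; d] i)].

Lemma hi_lt k : (hi k < 2)%N.
Proof. by rewrite /hi /lo; case: k => [|[|[|[|[|k]]]]]. Qed.
Lemma lo_lt k : (lo k < 2)%N.
Proof. by rewrite /hi /lo; case: k => [|[|[|[|[|k]]]]]. Qed.

Lemma hilo_inj (k1 k2 : 'I_4) : hi k1 = hi k2 -> lo k1 = lo k2 -> k1 = k2.
Proof.
move=> h l; apply/val_inj; move: h l.
by case: k1 => [[|[|[|[|k1]]]] H1] //; case: k2 => [[|[|[|[|k2]]]] H2].
Qed.

Lemma exists_k (a b : 'I_2) : exists k : 'I_4, hi k = a /\ lo k = b.
Proof.
case: a => [[|[|a]] Ha] //; case: b => [[|[|b]] Hb] //.
- by exists (@Ordinal 4 0 isT).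
- by exists (@Ordinal 4 1 isT).
- by exists (@Ordinal 4 2 isT).
- by exists (@Ordinal 4 3 isT).
Qed.

Lemma mkn_inj a b c d a' b' c' d' : mkn a b c d = mkn a' b' c' d' ->
  (a < 2)%N -> (b < 2)%N -> (c < 2)%N -> (d < 2)%N ->
  (a' < 2)%N -> (b' < 2)%N -> (c' < 2)%N -> (d' < 2)%N ->
  [/\ a = a', b = b', c = c' & d = d'].
Proof.
move=> E ha hb hc hd ha' hb' hc' hd'.
have e := fun i => congr1 (fun x : basis4 => nat_of_ord (x (inord i : 'I_4))) E.
move: (e 0%N) (e 1%N) (e 2%N) (e 3%N); rewrite /= !ffunE /= !(inordK (_ : (_ < 4)%N)) //=.
by rewrite !inordK.
Qed.

Lemma mkn_eta (x : basis4) :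
  x = mkn (x (inord 0)) (x (inord 1)) (x (inord 2)) (x (inord 3)).
Proof.
apply/ffunP => i; rewrite ffunE; apply/val_inj.
case: i => [[|[|[|[|i]]]] Hi] //=; rewrite inordK ?ltn_ord //;
  by congr (nat_of_ord (x _)); apply/val_inj; rewrite /= inordK.
Qed.

Definition S12 : {set 'I_4} := [set (inord 0 : 'I_4); inord 1].
Definition f12 (k : 'I_4) : 'I_#|{: basis4}| := enum_rank (mkn (hi k) (lo k) 0 0).
Definition g12 (k : 'I_4) : 'I_#|{: basis4}| := enum_rank (mkn 0 0 (hi k) (lo k)).

Lemma E12 (C : numClosedFieldType) (phi : state4 C) a b c d :
  coef_mx S12 phi (enum_rank (mkn a b 0 0)) (enum_rank (mkn 0 0 c d)) = phi (mkn a b c d).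
Proof.
rewrite /coef_mx mxE !enum_rankK.
have -> : [forall i, (i \notin S12) ==> (mkn a b 0 0 i == ord0)] = true.
  apply/forallP => i; rewrite /S12 !inE ffunE.
  by case: i => [[|[|[|[|i]]]] Hi] //; rewrite -?val_eqE /= ?(inordK (_ : (_ < 4)%N)) // ?(inordK (_ : (0 < 2)%N)).
have -> : [forall i, (i \in S12) ==> (mkn 0 0 c d i == ord0)] = true.
  apply/forallP => i; rewrite /S12 !inE ffunE.
  by case: i => [[|[|[|[|i]]]] Hi] //; rewrite -?val_eqE /= ?(inordK (_ : (_ < 4)%N)) // ?(inordK (_ : (0 < 2)%N)).
congr (phi _); apply/ffunP => i; rewrite !ffunE /S12 !inE.
by case: i => [[|[|[|[|i]]]] Hi] //; rewrite -?val_eqE /= ?(inordK (_ : (_ < 4)%N)) //.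
Qed.

Lemma f12_inj : injective f12.
Proof.
move=> k1 k2 /enum_rank_inj /mkn_inj.
by rewrite !hi_lt !lo_lt => /(_ isT isT isT isT isT isT isT isT) [h1 h2 h3 h4]; apply: hilo_inj.
Qed.

Lemma g12_inj : injective g12.
Proof.
move=> k1 k2 /enum_rank_inj /mkn_inj.
by rewrite !hi_lt !lo_lt => /(_ isT isT isT isT isT isT isT isT) [h1 h2 h3 h4]; apply: hilo_inj.
Qed.

Lemma Sup12 (C : numClosedFieldType) (phi : state4 C) r c :
  coef_mx S12 phi r c != 0 -> (exists k, r = f12 k) /\ (exists l, c = g12 l).
Proof.
rewrite mxE /=; case: ifP => [/andP [/forallP Hx /forallP Hy] _ | _]; last by rewrite eqxx.
split.
  have x2 := Hx (inord 2); have x3 := Hx (inord 3).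
  rewrite /S12 !inE -?val_eqE /= ?(inordK (_ : (_ < 4)%N)) // in x2 x3.
  have [k [hk lk]] := exists_k (enum_val r (inord 0)) (enum_val r (inord 1)).
  exists k; rewrite /f12.
  have -> : mkn (hi k) (lo k) 0 0 = enum_val r; last by rewrite enum_valK.
  by rewrite [RHS]mkn_eta hk lk (eqP x2) (eqP x3).
have x2 := Hy (inord 0); have x3 := Hy (inord 1).
rewrite /S12 !inE -?val_eqE /= ?(inordK (_ : (_ < 4)%N)) // in x2 x3.
have [k [hk lk]] := exists_k (enum_val c (inord 2)) (enum_val c (inord 3)).
exists k; rewrite /g12.
have -> : mkn 0 0 (hi k) (lo k) = enum_val c; last by rewrite enum_valK.
by rewrite [RHS]mkn_eta hk lk (eqP x2) (eqP x3).
Qed.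

Definition S13 : {set 'I_4} := [set (inord 0 : 'I_4); inord 2].
Definition f13 (k : 'I_4) : 'I_#|{: basis4}| := enum_rank (mkn (hi k) 0 (lo k) 0).
Definition g13 (k : 'I_4) : 'I_#|{: basis4}| := enum_rank (mkn 0 (hi k) 0 (lo k)).

Lemma E13 (C : numClosedFieldType) (phi : state4 C) a b c d :
  coef_mx S13 phi (enum_rank (mkn a 0 c 0)) (enum_rank (mkn 0 b 0 d)) = phi (mkn a b c d).
Proof.
rewrite /coef_mx mxE !enum_rankK.
have -> : [forall i, (i \notin S13) ==> (mkn a 0 c 0 i == ord0)] = true.
  apply/forallP => i; rewrite /S13 !inE ffunE.
  by case: i => [[|[|[|[|i]]]] Hi] //; rewrite -?val_eqE /= ?(inordK (_ : (_ < 4)%N)) // ?(inordK (_ : (0 < 2)%N)).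
have -> : [forall i, (i \in S13) ==> (mkn 0 b 0 d i == ord0)] = true.
  apply/forallP => i; rewrite /S13 !inE ffunE.
  by case: i => [[|[|[|[|i]]]] Hi] //; rewrite -?val_eqE /= ?(inordK (_ : (_ < 4)%N)) // ?(inordK (_ : (0 < 2)%N)).
congr (phi _); apply/ffunP => i; rewrite !ffunE /S13 !inE.
by case: i => [[|[|[|[|i]]]] Hi] //; rewrite -?val_eqE /= ?(inordK (_ : (_ < 4)%N)) //.
Qed.

Lemma f13_inj : injective f13.
Proof.
move=> k1 k2 /enum_rank_inj /mkn_inj.
by rewrite !hi_lt !lo_lt => /(_ isT isT isT isT isT isT isT isT) [h1 h2 h3 h4]; apply: hilo_inj.
Qed.

Lemma g13_inj : injective g13.
Proof.
move=> k1 k2 /enum_rank_inj /mkn_inj.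
by rewrite !hi_lt !lo_lt => /(_ isT isT isT isT isT isT isT isT) [h1 h2 h3 h4]; apply: hilo_inj.
Qed.

Lemma Sup13 (C : numClosedFieldType) (phi : state4 C) r c :
  coef_mx S13 phi r c != 0 -> (exists k, r = f13 k) /\ (exists l, c = g13 l).
Proof.
rewrite mxE /=; case: ifP => [/andP [/forallP Hx /forallP Hy] _ | _]; last by rewrite eqxx.
split.
  have x2 := Hx (inord 1); have x3 := Hx (inord 3).
  rewrite /S13 !inE -?val_eqE /= ?(inordK (_ : (_ < 4)%N)) // in x2 x3.
  have [k [hk lk]] := exists_k (enum_val r (inord 0)) (enum_val r (inord 2)).
  exists k; rewrite /f13.
  have -> : mkn (hi k) 0 (lo k) 0 = enum_val r; last by rewrite enum_valK.
  by rewrite [RHS]mkn_eta hk lk (eqP x2) (eqP x3).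
have x2 := Hy (inord 0); have x3 := Hy (inord 2).
rewrite /S13 !inE -?val_eqE /= ?(inordK (_ : (_ < 4)%N)) // in x2 x3.
have [k [hk lk]] := exists_k (enum_val c (inord 1)) (enum_val c (inord 3)).
exists k; rewrite /g13.
have -> : mkn 0 (hi k) 0 (lo k) = enum_val c; last by rewrite enum_valK.
by rewrite [RHS]mkn_eta hk lk (eqP x2) (eqP x3).
Qed.

Definition S14 : {set 'I_4} := [set (inord 0 : 'I_4); inord 3].
Definition f14 (k : 'I_4) : 'I_#|{: basis4}| := enum_rank (mkn (hi k) 0 0 (lo k)).
Definition g14 (k : 'I_4) : 'I_#|{: basis4}| := enum_rank (mkn 0 (hi k) (lo k) 0).

Lemma E14 (C : numClosedFieldType) (phi : state4 C) a b c d :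
  coef_mx S14 phi (enum_rank (mkn a 0 0 d)) (enum_rank (mkn 0 b c 0)) = phi (mkn a b c d).
Proof.
rewrite /coef_mx mxE !enum_rankK.
have -> : [forall i, (i \notin S14) ==> (mkn a 0 0 d i == ord0)] = true.
  apply/forallP => i; rewrite /S14 !inE ffunE.
  by case: i => [[|[|[|[|i]]]] Hi] //; rewrite -?val_eqE /= ?(inordK (_ : (_ < 4)%N)) // ?(inordK (_ : (0 < 2)%N)).
have -> : [forall i, (i \in S14) ==> (mkn 0 b c 0 i == ord0)] = true.
  apply/forallP => i; rewrite /S14 !inE ffunE.
  by case: i => [[|[|[|[|i]]]] Hi] //; rewrite -?val_eqE /= ?(inordK (_ : (_ < 4)%N)) // ?(inordK (_ : (0 < 2)%N)).
congr (phi _); apply/ffunP => i; rewrite !ffunE /S14 !inE.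
by case: i => [[|[|[|[|i]]]] Hi] //; rewrite -?val_eqE /= ?(inordK (_ : (_ < 4)%N)) //.
Qed.

Lemma f14_inj : injective f14.
Proof.
move=> k1 k2 /enum_rank_inj /mkn_inj.
by rewrite !hi_lt !lo_lt => /(_ isT isT isT isT isT isT isT isT) [h1 h2 h3 h4]; apply: hilo_inj.
Qed.

Lemma g14_inj : injective g14.
Proof.
move=> k1 k2 /enum_rank_inj /mkn_inj.
by rewrite !hi_lt !lo_lt => /(_ isT isT isT isT isT isT isT isT) [h1 h2 h3 h4]; apply: hilo_inj.
Qed.

Lemma Sup14 (C : numClosedFieldType) (phi : state4 C) r c :
  coef_mx S14 phi r c != 0 -> (exists k, r = f14 k) /\ (exists l, c = g14 l).
Proof.
rewrite mxE /=; case: ifP => [/andP [/forallP Hx /forallP Hy] _ | _]; last by rewrite eqxx.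
split.
  have x2 := Hx (inord 1); have x3 := Hx (inord 2).
  rewrite /S14 !inE -?val_eqE /= ?(inordK (_ : (_ < 4)%N)) // in x2 x3.
  have [k [hk lk]] := exists_k (enum_val r (inord 0)) (enum_val r (inord 3)).
  exists k; rewrite /f14.
  have -> : mkn (hi k) 0 0 (lo k) = enum_val r; last by rewrite enum_valK.
  by rewrite [RHS]mkn_eta hk lk (eqP x2) (eqP x3).
have x2 := Hy (inord 0); have x3 := Hy (inord 3).
rewrite /S14 !inE -?val_eqE /= ?(inordK (_ : (_ < 4)%N)) // in x2 x3.
have [k [hk lk]] := exists_k (enum_val c (inord 1)) (enum_val c (inord 2)).
exists k; rewrite /g14.
have -> : mkn 0 (hi k) (lo k) 0 = enum_val c; last by rewrite enum_valK.
by rewrite [RHS]mkn_eta hk lk (eqP x2) (eqP x3).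
Qed.


Theorem mainTheorem8 (C : numClosedFieldType) (phi : state4 C) :
  is_pure_state phi ->
  ~ [/\ schmidt_rank [set (inord 0 : 'I_4); inord 1] phi = 4%N,
        schmidt_rank [set (inord 0 : 'I_4); inord 2] phi = 2%N &
        schmidt_rank [set (inord 0 : 'I_4); inord 3] phi = 2%N].
Proof.
move=> _ [r12 r13 r14].
have R12 : \rank (coef_mx S12 phi) = 4%N := r12.
have R13 : \rank (coef_mx S13 phi) = 2%N := r13.
have R14 : \rank (coef_mx S14 phi) = 2%N := r14.
pose M12 := mxsub f12 g12 (coef_mx S12 phi).
pose M13 := mxsub f13 g13 (coef_mx S13 phi).
pose M14 := mxsub f14 g14 (coef_mx S14 phi).
have rk12 : \rank M12 = 4%N.
  apply/eqP; rewrite eqn_leq rank_leq_row /= -[X in (X <= _)%N]R12.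
  apply: rank_le_mxsub; [exact: f12_inj | exact: g12_inj | exact: Sup12].
have d12 : \det M12 != 0 by rewrite -unitfE -unitmxE -row_free_unit /row_free rk12.
have d14 : \det M14 = 0.
  have h : (\rank M14 <= 2)%N by apply: (leq_trans (rank_mxsub_le _ _ _)); rewrite R14.
  apply/eqP; apply: contraTT h => nz; rewrite -ltnNge.
  have : row_free M14 by rewrite row_free_unit unitmxE unitfE.
  by rewrite /row_free => /eqP ->.
have h13 : (\rank M13 <= 2)%N by apply: (leq_trans (rank_mxsub_le _ _ _)); rewrite R13.
pose X : 'M[C]_(4, 2) := col_ebase M13 *m pid_mx (\rank M13).
pose Y : 'M[C]_(2, 4) := pid_mx (\rank M13) *m row_ebase M13.
have fac : M13 = X *m Y.
  rewrite /X /Y mulmxA -(mulmxA (col_ebase M13)) mul_pid_mx minnn (minn_idPr h13).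
  by rewrite mulmx_ebase.
have := @core C M12 M14 (fun a b c d => phi (mkn a b c d))
   (fun n k => X (inord n) (inord k)) (fun k n => Y (inord k) (inord n)).
rewrite d14 oppr0 => H; move: d12; rewrite H ?eqxx //.
- move=> n m hn hm; rewrite /M12 mxE /f12 /g12 E12.
  by rewrite !(inordK (_ : (_ < 4)%N)).
- move=> n m hn hm; rewrite /M14 mxE /f14 /g14 E14.
  by rewrite !(inordK (_ : (_ < 4)%N)).
move=> a b c d ha hb hc hd.
have e := congr1 (fun M : 'M[C]_4 => M (inord (code a c)) (inord (code b d))) fac.
move: e; rewrite /= /M13 mxE /f13 /g13 E13 !(inordK (code_lt _ _)) //.
rewrite !hi_code // !lo_code // => ->.
rewrite mxE !big_ord_recl big_ord0 addr0.
have o0 : (inord 0 : 'I_2) = ord0 by apply/val_inj; rewrite /= inordK.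
have o1 : (inord 1 : 'I_2) = lift ord0 ord0 by apply/val_inj; rewrite /= inordK.
by rewrite o0 o1.
Qed.
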